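(* For all integers $x\ge0$ and $r\ge1$ there is a finite undirected graph $H$ with two specified vertices $s,t$ such that the smallest $s$-$t$ separator of $H$ has size $r$ and the union of all important $s$-$t$ separators of excess at most $x$ has size $2^{x+1}r-r$.
   Context: For disjoint $X,Y\subseteq V(H)$, a set $K\subseteq V(H)\setminus(X\cup Y)$ is an $X$-$Y$ separator if $H\setminus K$ has no path from $X$ to $Y$; an $s$-$t$ separator is a $\{s\}$-$\{t\}$ separator. $NR(H,A,B)$ is the set of vertices not reachable from $A$ in $H\setminus B$. For separators, $K_1\prec^*K_2$ means $NR(H,Y,K_1)\subset NR(H,Y,K_2)$ (proper inclusion). A minimal $X$-$Y$ separator $K$ is important if there is no $X$-$Y$ separator $K'$ with $K\prec^*K'$ and $|K|\ge|K'|$. The excess of an important separator $S$ is $|S|-r_0$, where $r_0$ is the size of a smallest important separator. *)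

(* Defs.v *)
(* Finite undirected simple graphs as symmetric irreflexive relations. *)
From mathcomp Require Import all_boot.
Set Implicit Arguments. Unset Strict Implicit. Unset Printing Implicit Defensive.

Section Sep.
Variables (V : finType) (e : rel V).

Definition del_rel (B : {set V}) : rel V :=
  fun u v => [&& e u v, u \notin B & v \notin B].

Definition has_path_avoiding (X Y K : {set V}) : bool :=
  [exists a in X, exists b in Y,
     [&& a \notin K, b \notin K & connect (del_rel K) a b]].

Definition is_sep (X Y K : {set V}) : bool :=
  [&& [disjoint K & X], [disjoint K & Y] & ~~ has_path_avoiding X Y K].

Definition NR (A B : {set V}) : {set V} :=
  [set v | ~~ [exists a in A, (a \notin B) && connect (del_rel B) a v]].

Definition sep_prec (Y K1 K2 : {set V}) : bool := NR Y K1 \proper NR Y K2.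

Definition minimal_sep (X Y K : {set V}) : bool :=
  is_sep X Y K && [forall K' : {set V}, (K' \proper K) ==> ~~ is_sep X Y K'].

Definition important_sep (X Y K : {set V}) : bool :=
  minimal_sep X Y K &&
  [forall K' : {set V}, ~~ [&& is_sep X Y K', sep_prec Y K K' & #|K'| <= #|K|]].

Definition important_excess_le (X Y : {set V}) (x : nat) (S : {set V}) : bool :=
  important_sep X Y S &&
  [exists S0 : {set V}, [&& important_sep X Y S0,
     [forall S' : {set V}, important_sep X Y S' ==> (#|S0| <= #|S'|)] &
     #|S| <= #|S0| + x]].

Definition union_important_excess_le (X Y : {set V}) (x : nat) : {set V} :=
  \bigcup_(S : {set V} | important_excess_le X Y x S) S.

End Sep.

(* Main.v *)
Require Import Defs.
From mathcomp Require Import all_boot zify.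
Set Implicit Arguments. Unset Strict Implicit. Unset Printing Implicit Defensive.

Lemma exp2_gt1 k : 0 < k -> 1 < 2 ^ k.
Proof. by move=> k0; rewrite -{1}(expn0 2) ltn_exp2l. Qed.

Lemma divexpD b i j : b %/ 2 ^ (i + j) = b %/ 2 ^ i %/ 2 ^ j.
Proof. by rewrite expnD divnMA. Qed.

Definition ancn a b := (0 < a) && [exists k : 'I_b.+1, b %/ 2 ^ k == a].

Lemma ancnP a b : reflect (0 < a /\ exists k, b %/ 2 ^ k = a) (ancn a b).
Proof.
apply: (iffP andP) => [[-> /existsP [k /eqP <-]]|[a0 [k hk]]]; first by split=> //; exists k.
split=> //; apply/existsP.
have kb : k < b.+1.
  have : 2 ^ k <= b by rewrite -divn_gt0 ?expn_gt0 // hk.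
  have := ltn_expl k (isT : 1 < 2). lia.
by exists (Ordinal kb); rewrite hk.
Qed.

Lemma ancn_gt0 a b : ancn a b -> 0 < a.
Proof. by case/andP. Qed.

Lemma ancn_refl a : 0 < a -> ancn a a.
Proof. by move=> a0; apply/ancnP; split=> //; exists 0; rewrite expn0 divn1. Qed.

Lemma ancn_le a b : ancn a b -> a <= b.
Proof. by case/ancnP=> _ [k <-]; apply: leq_div. Qed.

Lemma ancn_gt0r a b : ancn a b -> 0 < b.
Proof. by move=> h; have := ancn_le h; have := ancn_gt0 h; lia. Qed.

Lemma ancn_trans a b c : ancn a b -> ancn b c -> ancn a c.
Proof.
case/ancnP=> a0 [i hi] /ancnP [_ [j hj]]; apply/ancnP; split=> //.
by exists (j + i); rewrite divexpD hj.
Qed.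

Lemma ancn_antisym a b : ancn a b -> ancn b a -> a = b.
Proof. by move=> /ancn_le h1 /ancn_le h2; apply/eqP; rewrite eqn_leq h1 h2. Qed.

Lemma ancn_cmp a1 a2 b : ancn a1 b -> ancn a2 b -> ancn a1 a2 \/ ancn a2 a1.
Proof.
case/ancnP=> p1 [i hi] /ancnP [p2 [j hj]].
case: (leqP i j) => hij.
  right; apply/ancnP; split=> //; exists (j - i).
  by rewrite -hi -divexpD subnKC.
left; apply/ancnP; split=> //; exists (i - j).
by rewrite -hj -divexpD subnKC // ltnW.
Qed.

Lemma ancn_half a b : ancn a b -> a != b -> ancn a (b %/ 2).
Proof.
case/ancnP=> a0 [[|k] hk] ne; first by move: hk ne; rewrite expn0 divn1 => ->; rewrite eqxx.
apply/ancnP; split=> //; exists k.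
by rewrite -(expn1 2) -divexpD.
Qed.

Lemma ancn_strict_le a b : ancn a b -> a != b -> a <= b %/ 2.
Proof. by move=> h ne; apply: ancn_le; apply: ancn_half. Qed.

Lemma ancn_parent b : 0 < b %/ 2 -> ancn (b %/ 2) b.
Proof. by move=> h; apply/ancnP; split=> //; exists 1; rewrite expn1. Qed.

Lemma ancn_one b : 0 < b -> ancn 1 b.
Proof.
elim: b {-2}b (leqnn b) => [|n IH] b lb b0; first by lia.
case: (ltnP 1 b) => hb.
2:{ have -> : b = 1 by lia. exact: ancn_refl. }
have h2 : 0 < b %/ 2 by lia.
apply: ancn_trans (IH _ _ h2) (ancn_parent h2). lia.
Qed.

Lemma ancn_children a b : ancn a b -> a != b ->
  ancn (2 * a) b \/ ancn (2 * a).+1 b.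
Proof.
case/ancnP=> a0 [[|k] hk] ne; first by move: hk ne; rewrite expn0 divn1 => ->; rewrite eqxx.
set g := b %/ 2 ^ k.
have hg : g %/ 2 = a by rewrite /g; have := divexpD b k 1; rewrite expn1 addn1 => <-.
have g0 : 0 < g by lia.
have ag : ancn g b by apply/ancnP; split=> //; exists k.
have : g = 2 * a \/ g = (2 * a).+1 by lia.
by case=> <-; [left|right].
Qed.

Lemma ancn_children_excl a b : 0 < a -> ancn (2 * a) b -> ancn (2 * a).+1 b -> False.
Proof.
move=> a0 h1 h2; case: (ancn_cmp h1 h2) => h.
  have ne : 2 * a != (2 * a).+1 by lia.
  have := ancn_strict_le h ne. lia.
have := ancn_le h. lia.
Qed.

Lemma ancn_bound x a b : ancn a b -> a != b -> b < 2 ^ x.+1 -> a < 2 ^ x.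
Proof. move=> h ne; have := ancn_strict_le h ne; rewrite expnS; lia. Qed.

Lemma ancn_depth x b k : b < 2 ^ x.+1 -> 0 < b %/ 2 ^ k -> k <= x.
Proof.
move=> hb; rewrite divn_gt0 ?expn_gt0 // => hk.
have : 2 ^ k < 2 ^ x.+1 by lia.
by rewrite ltn_exp2l.
Qed.

Definition sib g := if odd g then g.-1 else g.+1.

Lemma sibP h g : h %/ 2 = g %/ 2 -> h != g -> h = sib g.
Proof. rewrite /sib => H1 H2; case: ifP => Ho; move/eqP: H2; rewrite -?modn2 in Ho *; lia. Qed.


Section Tree.
Variables x r' : nat.
Local Notation r := r'.+1.
Local Notation M := (2 ^ x.+1).

Definition T := option (option ('I_r * 'I_M)%type).

Lemma M_gt0 : 0 < M. Proof. by rewrite expn_gt0. Qed.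
Lemma M_gt1 : 1 < M. Proof. by rewrite -{1}(expn0 2) ltn_exp2l. Qed.
Lemma M_eq : M = 2 * 2 ^ x. Proof. by rewrite expnS. Qed.

Definition h0 : 'I_M := Ordinal M_gt0.
Definition mkh (h : nat) : 'I_M := insubd h0 h.
Definition nd (c : 'I_r) (h : nat) : T := Some (Some (c, mkh h)).
Definition sT : T := None.
Definition tT : T := Some None.
Definition cpy (a : T) : 'I_r := if a is Some (Some p) then p.1 else ord0.
Definition hgt (a : T) : nat := if a is Some (Some p) then val p.2 else 0.
Definition isnode (a : T) := 0 < hgt a.

Lemma hgt_lt a : hgt a < M.
Proof. by case: a => [[[c h]|]|] //=; rewrite M_gt0. Qed.

Lemma nd_hgt c h : h < M -> hgt (nd c h) = h.
Proof. by move=> hM; rewrite /= /mkh insubdK. Qed.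

Lemma nd_cpy c h : cpy (nd c h) = c.
Proof. by []. Qed.

Lemma node_eta a : isnode a -> a = nd (cpy a) (hgt a).
Proof. by case: a => [[[c h]|]|] //= _; rewrite /nd /mkh valKd. Qed.

Lemma node_eq a b : isnode a -> isnode b -> cpy a = cpy b -> hgt a = hgt b -> a = b.
Proof. by move=> na nb ec eh; rewrite (node_eta na) (node_eta nb) ec eh. Qed.

Lemma nd_node c h : 0 < h -> h < M -> isnode (nd c h).
Proof. by move=> h0' hM; rewrite /isnode nd_hgt. Qed.

Lemma sT_nn : isnode sT = false. Proof. by []. Qed.
Lemma tT_nn : isnode tT = false. Proof. by []. Qed.

Definition D (a b : T) : bool :=
  match a, b with
  | None, Some (Some p) => val p.2 == 1
  | Some (Some p), Some (Some q) => (p.1 == q.1) && (0 < val p.2) && (val q.2 %/ 2 == val p.2)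
  | Some (Some p), Some None => 2 ^ x <= val p.2
  | _, _ => false
  end.

Definition E a b := D a b || D b a.

Lemma E_sym : symmetric E.
Proof. by move=> a b; rewrite /E orbC. Qed.

Lemma E_irr : irreflexive E.
Proof.
move=> a; rewrite /E orbb; case: a => [[[c h]|]|] //=.
rewrite eqxx /=; apply/negP => /andP [h1 /eqP h2]; move: h1 h2. lia.
Qed.

Lemma DP a b : D a b -> [\/ [/\ a = sT, isnode b & hgt b = 1],
   [/\ isnode a, isnode b, cpy a = cpy b & hgt b %/ 2 = hgt a] |
   [/\ b = tT, isnode a & 2 ^ x <= hgt a]].
Proof.
case: a => [[[c h]|]|]; case: b => [[[c' h']|]|] //=.
- case/andP => /andP [/eqP -> h0'] /eqP e; apply: Or32; split=> //; rewrite /isnode /=; lia.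
- move=> hx; apply: Or33; split=> //; rewrite /isnode /=.
  have := expn_gt0 2 x; lia.
- by move/eqP=> e; apply: Or31; split=> //; rewrite /isnode /= e.
Qed.

Lemma E_root c : E sT (nd c 1).
Proof. rewrite /E /= /mkh insubdK //. exact: M_gt1. Qed.

Lemma E_child a b : isnode a -> isnode b -> cpy a = cpy b -> hgt b %/ 2 = hgt a -> E a b.
Proof.
case: a => [[[c h]|]|] //; case: b => [[[c' h']|]|] //= na nb ec eh.
by apply/orP; left; rewrite /= ec eh !eqxx andbT; exact: na.
Qed.

Lemma E_leaf a : isnode a -> 2 ^ x <= hgt a -> E a tT.
Proof. by case: a => [[[c h]|]|] //= na hx; apply/orP; left. Qed.


Definition ancT (a b : T) := (cpy a == cpy b) && ancn (hgt a) (hgt b).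

Lemma ancT_nodeL a b : ancT a b -> isnode a.
Proof. by case/andP=> _ /ancn_gt0. Qed.
Lemma ancT_nodeR a b : ancT a b -> isnode b.
Proof. by case/andP=> _ /ancn_gt0r. Qed.
Lemma ancT_refl a : isnode a -> ancT a a.
Proof. by move=> na; rewrite /ancT eqxx ancn_refl. Qed.
Lemma ancT_trans a b c : ancT a b -> ancT b c -> ancT a c.
Proof.
case/andP=> /eqP e1 h1 /andP [/eqP e2 h2]; rewrite /ancT e1 e2 eqxx.
exact: ancn_trans h1 h2.
Qed.
Lemma ancT_antisym a b : ancT a b -> ancT b a -> a = b.
Proof.
move=> h1 h2; apply: node_eq (ancT_nodeL h1) (ancT_nodeR h1) _ _.
  by case/andP: h1 => /eqP.
by case/andP: h1 => _ h1; case/andP: h2 => _ h2; apply: ancn_antisym.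
Qed.
Lemma ancT_cmp a1 a2 b : ancT a1 b -> ancT a2 b -> ancT a1 a2 \/ ancT a2 a1.
Proof.
case/andP=> /eqP e1 h1 /andP [/eqP e2 h2]; rewrite /ancT e1 e2 eqxx /=.
exact: ancn_cmp h1 h2.
Qed.
Lemma ancT_le a b : ancT a b -> hgt a <= hgt b.
Proof. by case/andP=> _ /ancn_le. Qed.

Definition LDT (a y : T) := [&& cpy y == cpy a, isnode a &
   [exists j : 'I_(hgt y).+1, hgt y == hgt a * 2 ^ j]].

Lemma LDT_anc a y : LDT a y -> ancT a y.
Proof.
case/and3P=> /eqP ec na /existsP [[j jb] /= /eqP hj]; rewrite /ancT ec eqxx /=.
by apply/ancnP; split=> //; exists j; rewrite hj mulnK // expn_gt0.
Qed.

Lemma LDT_self a : isnode a -> LDT a a.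
Proof.
move=> na; rewrite /LDT eqxx na /=; apply/existsP; exists ord0.
by rewrite expn0 muln1.
Qed.

Lemma LDT_node a y : LDT a y -> isnode y.
Proof. by move/LDT_anc/ancT_nodeR. Qed.

Lemma LDT_child a y : isnode a -> hgt a < 2 ^ x ->
  LDT (nd (cpy a) (2 * hgt a)) y -> LDT a y.
Proof.
move=> na hx; have hM : 2 * hgt a < M by rewrite M_eq; lia.
rewrite {1}/LDT nd_hgt // nd_cpy.
case/and3P=> /eqP ec _ /existsP [[j jb] /= /eqP hj].
rewrite /LDT ec eqxx na /=; apply/existsP.
have hj' : hgt y = hgt a * 2 ^ j.+1 by rewrite hj expnS; lia.
have lj : j.+1 < (hgt y).+1.
  have := ltn_expl j.+1 (isT : 1 < 2).
  have : 0 < hgt a := na. rewrite hj'. nia.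
by exists (Ordinal lj); rewrite /= hj'.
Qed.

Definition Kp (v u : T) := isnode u && [|| (cpy u != cpy v) && (hgt u == 1),
   (cpy u == cpy v) && (hgt u == hgt v) |
   (cpy u == cpy v) && [&& ancn (hgt u %/ 2) (hgt v), hgt u %/ 2 != hgt v
                         & ~~ ancn (hgt u) (hgt v)]].

Lemma Kp_node v u : Kp v u -> isnode u.
Proof. by case/andP. Qed.

Lemma Kp_self v : isnode v -> Kp v v.
Proof. by move=> nv; rewrite /Kp nv !eqxx orbT. Qed.

Lemma P1 v a b : isnode v -> Kp v a -> Kp v b -> ancT a b -> a = b.
Proof.
move=> nv Ka Kb ab; have [/eqP eab hab] := andP ab.
have na := Kp_node Ka; have nb := Kp_node Kb.
case/andP: Ka => _ /or3P [/andP [ca ha]|/andP [/eqP ca /eqP ha]|/andP [/eqP ca /and3P [a1 a2 a3]]];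
case/andP: Kb => _ /or3P [/andP [cb hb]|/andP [/eqP cb /eqP hb]|/andP [/eqP cb /and3P [b1 b2 b3]]].
- by apply: node_eq => //; rewrite (eqP ha) (eqP hb).
- by move: ca; rewrite eab cb eqxx.
- by move: ca; rewrite eab cb eqxx.
- by move: cb; rewrite -eab ca eqxx.
- by apply: node_eq => //; rewrite ha hb.
- exfalso; rewrite ha in hab.
  case: (eqVneq (hgt v) (hgt b)) => [e|ne].
    by move: b3; rewrite -e ancn_refl.
  have := ancn_half hab ne => h; move/negP: b2; apply; apply/eqP.
  exact: ancn_antisym b1 h.
- by move: cb; rewrite -eab ca eqxx.
- by move: a3; rewrite -hb hab.
- case: (eqVneq (hgt a) (hgt b)) => [e|ne]; first by apply: node_eq.
  exfalso; move/negP: a3; apply; apply: ancn_trans b1.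
  exact: ancn_half.
Qed.

Lemma P2 v y : isnode v -> isnode y ->
  (exists2 a, Kp v a & ancT a y) \/ (ancT y v /\ hgt y != hgt v).
Proof.
move=> nv ny.
case: (eqVneq (cpy y) (cpy v)) => cyv; last first.
  left; exists (nd (cpy y) 1).
    rewrite /Kp nd_cpy nd_hgt ?M_gt1 // cyv eqxx /=.
    by rewrite andbT; apply: nd_node => //; exact: M_gt1.
  by rewrite /ancT nd_cpy eqxx nd_hgt ?M_gt1 //= ancn_one.
case: (boolP (ancn (hgt v) (hgt y))) => avy.
  by left; exists v; [exact: Kp_self | rewrite /ancT cyv eqxx].
case: (boolP (ancn (hgt y) (hgt v))) => ayv.
  right; split; first by rewrite /ancT cyv eqxx.
  by apply: contraNneq avy => ->; apply: ancn_refl.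
left.
have ex : exists j, ancn (hgt y %/ 2 ^ j) (hgt v).
  have := ancn_one ny; case/ancnP=> _ [j hj]; exists j; rewrite hj.
  exact: ancn_one.
case: (ex_minnP ex) => j hj jmin.
have j0 : j != 0 by apply: contraNneq ayv => e; move: hj; rewrite e expn0 divn1.
set g := hgt y %/ 2 ^ j.-1.
have hg : g %/ 2 = hgt y %/ 2 ^ j.
  by rewrite /g; have := divexpD (hgt y) j.-1 1; rewrite expn1 addn1 prednK ?lt0n // => <-.
have g0 : 0 < g by have := ancn_gt0 hj; rewrite -hg; lia.
have gM : g < M by have := leq_div (hgt y) (2 ^ j.-1); have := hgt_lt y; rewrite -/g; lia.
exists (nd (cpy y) g).
  rewrite /Kp nd_cpy nd_hgt // cyv eqxx nd_node //= hg hj /=.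
  apply/orP; right.
  apply/andP; split.
    by apply: contraNneq avy => <-; apply/ancnP; split; [exact: ancn_gt0 hj|exists j].
  apply/negP => hgv; have := jmin _ hgv; rewrite -/g.
  by have := j0; rewrite -lt0n; lia.
rewrite /ancT nd_cpy eqxx nd_hgt //=; apply/ancnP; split=> //.
by exists j.-1.
Qed.

Definition RegT v y := (y == tT) || [exists a, [&& Kp v a, ancT a y & a != y]].


Definition csib (w i : T) : T :=
  if ancn (2 * hgt i) (hgt w) then nd (cpy i) (2 * hgt i).+1 else nd (cpy i) (2 * hgt i).

Lemma csib_prop w i : ancT i w -> i != w ->
  [/\ isnode (csib w i), cpy (csib w i) = cpy i, hgt (csib w i) %/ 2 = hgt i
    & ~~ ancT (csib w i) w].
Proof.
case/andP=> /eqP ciw aiw ne.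
have hne : hgt i != hgt w.
  apply: contra ne => /eqP h; apply/eqP; apply: node_eq => //; first exact: ancn_gt0 aiw.
  exact: ancn_gt0r aiw.
have hx := ancn_bound aiw hne (hgt_lt w).
have i0 := ancn_gt0 aiw.
have h1 : (2 * hgt i).+1 < 2 ^ x.+1 by rewrite M_eq; lia.
have h2 : 2 * hgt i < 2 ^ x.+1 by rewrite M_eq; lia.
rewrite /csib; case: ifP => hc; rewrite nd_cpy nd_hgt //; split=> //.
- by apply: nd_node.
- lia.
- rewrite /ancT nd_cpy nd_hgt // ciw eqxx /=; apply/negP => h.
  exact: ancn_children_excl i0 hc h.
- by apply: nd_node => //; lia.
- lia.
- by rewrite /ancT nd_cpy nd_hgt // ciw eqxx /= hc.
Qed.

Lemma ancT_csib w i : ancT i w -> i != w -> ancT i (csib w i).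
Proof.
move=> aiw ne; have [nc cc hc _] := csib_prop aiw ne.
rewrite /ancT cc eqxx /= -hc ancn_parent // hc; exact: ancn_gt0 (andP aiw).2.
Qed.

Definition Pp (w i y : T) : bool :=
  if i == w then LDT w y
  else if ancT i w then (y == i) || LDT (csib w i) y else LDT i y.

Lemma Pp_anc w i y : isnode i -> Pp w i y -> ancT i y.
Proof.
move=> ni; rewrite /Pp; case: eqP => [->|ne]; first exact: LDT_anc.
case: ifP => aiw; last exact: LDT_anc.
case/orP=> [/eqP ->|h]; first exact: ancT_refl.
have ne' : i != w by apply/eqP.
exact: ancT_trans (ancT_csib aiw ne') (LDT_anc h).
Qed.

Lemma Pp_aux v w u0 j y : isnode v -> Kp v u0 -> ancT u0 w -> Kp v j -> j != w ->
  LDT w y -> Pp w j y -> False.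
Proof.
move=> nv K0 a0 Kj jw Lw; rewrite /Pp (negbTE jw).
have awy := LDT_anc Lw.
have nj := Kp_node Kj.
case: ifP => ajw.
  case/orP=> [/eqP e|Lc].
    by move: jw; rewrite (ancT_antisym ajw) ?eqxx // -e.
  have [nc cc hc nacw] := csib_prop ajw jw.
  case: (ancT_cmp (LDT_anc Lc) awy) => h; first by rewrite h in nacw.
  have ne : hgt w != hgt (csib w j).
    apply: contra nacw => /eqP e; rewrite (_ : csib w j = w) ?ancT_refl //.
      exact: ancT_nodeR ajw.
    apply: node_eq => //; first exact: ancT_nodeR ajw.
    by case/andP: h => /eqP.
  case/andP: h => /eqP cwc hwc.
  have := ancn_half hwc ne; rewrite hc => hwj.
  case/andP: (ajw) => /eqP cjw hjw.
  move/negP: jw; apply; apply/eqP; apply: node_eq => //; first exact: ancT_nodeR ajw.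
  exact: ancn_antisym hjw hwj.
move=> Lj; case: (ancT_cmp (LDT_anc Lj) awy) => h; first by rewrite h in ajw.
have := P1 nv K0 Kj (ancT_trans a0 h) => e.
by rewrite -e a0 in ajw.
Qed.

Lemma Pp_disj v w u0 i j y : isnode v -> Kp v u0 -> ancT u0 w ->
  (i == w) || Kp v i -> (j == w) || Kp v j -> i != j -> Pp w i y -> Pp w j y -> False.
Proof.
move=> nv K0 a0 Ii Ij ij Pi Pj.
case: (eqVneq i w) Ii => [iw _|iw /= Ki].
  subst i; case: (eqVneq j w) Ij => [jw|jw /= Kj]; first by rewrite jw eqxx in ij.
  by move: Pi; rewrite /Pp eqxx => Lw; exact: Pp_aux nv K0 a0 Kj jw Lw Pj.
case: (eqVneq j w) Ij => [jw _|jw /= Kj].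
  subst j; by move: Pj; rewrite /Pp eqxx => Lw; exact: Pp_aux nv K0 a0 Ki iw Lw Pi.
have ai := Pp_anc (Kp_node Ki) Pi; have aj := Pp_anc (Kp_node Kj) Pj.
case: (ancT_cmp ai aj) => h.
  by move: ij; rewrite (P1 nv Ki Kj h) eqxx.
by move: ij; rewrite (P1 nv Kj Ki h) eqxx.
Qed.

Lemma RegT_closed v a b : isnode v -> E a b -> ~~ Kp v a -> ~~ Kp v b ->
  RegT v a -> RegT v b.
Proof.
move=> nv eab nKa nKb; rewrite /RegT.
case/orP=> [/eqP ea|/existsP [k /and3P [Kk ka kna]]].
  subst a; case/orP: eab => /DP [[]|[]|[]] //.
  all: try by rewrite /isnode.
  move=> _ nb hb; case: (P2 nv nb) => [[k Kk kb]|[bv ne]].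
    apply/orP; right; apply/existsP; exists k; rewrite Kk kb /=.
    by apply: contraNneq nKb => <-.
  exfalso; have := ancn_bound (andP bv).2 ne (hgt_lt v); lia.
have nk := ancT_nodeL ka; have na := ancT_nodeR ka.
case: (eqVneq b tT) => [->|bt] /=; first by []. apply/existsP; exists k; rewrite Kk /=.
have knb : k != b by apply: contraNneq nKb => <-.
rewrite knb andbT.
case/orP: eab => /DP [[ea nb hb]|[_ nb cab hab]|[eb _ _]].
- by rewrite ea in na.
- apply: ancT_trans ka _; rewrite /ancT cab eqxx /= -hab; apply: ancn_parent.
  by rewrite hab.
- by rewrite eb eqxx in bt.
- case/andP: (ka) => _ hka.
  have hk1 := ancn_le hka; have hk0 := ancn_gt0 hka.
  exfalso; move/negP: kna; apply; apply/eqP; apply: node_eq => //.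
    by case/andP: (ka) => /eqP.
  by lia.
- have hne : hgt k != hgt a.
    by apply: contra kna => /eqP h; apply/eqP; apply: node_eq => //; case/andP: ka => /eqP.
  case/andP: ka => /eqP cka hka.
  rewrite /ancT cka -cab eqxx /= -hab; exact: ancn_half.
- by rewrite eb in na.
Qed.

Section Graph.
Variables (V : finType) (dec : V -> T) (enc : T -> V).
Hypotheses (decK : cancel dec enc) (encK : cancel enc dec).

Definition eV : rel V := fun u w => E (dec u) (dec w).
Definition sV := enc sT.
Definition tV := enc tT.
Local Notation DR K := (del_rel eV K).

Lemma eV_sym : symmetric eV.
Proof. by move=> a b; rewrite /eV E_sym. Qed.

Lemma DR_sym (K : {set V}) : symmetric (DR K).
Proof. by move=> a b; rewrite /del_rel eV_sym; case: (a \in K); case: (b \in K); rewrite /= ?andbF. Qed.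

Lemma conn_sym (K : {set V}) a b : connect (DR K) a b = connect (DR K) b a.
Proof. exact: (sym_connect_sym (DR_sym K)). Qed.

Lemma conn_edge (K : {set V}) a b : E a b -> enc a \notin K -> enc b \notin K ->
  connect (DR K) (enc a) (enc b).
Proof. by move=> eab na nb; apply: connect1; rewrite /del_rel /eV !encK eab na nb. Qed.

Lemma down_conn (K : {set V}) a : tV \notin K -> isnode a ->
  (forall y, LDT a y -> enc y \notin K) -> connect (DR K) (enc a) tV.
Proof.
move=> tK; move: {-1}(2 ^ x.+1 - hgt a) (leqnn (2 ^ x.+1 - hgt a)) => n.
elim: n a => [|n IH] a hn na hK.
  by have := hgt_lt a; lia.
have aK := hK a (LDT_self na).
have a0 : 0 < hgt a := na.
case: (leqP (2 ^ x) (hgt a)) => hx.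
  by apply: conn_edge => //; exact: E_leaf.
set b := nd (cpy a) (2 * hgt a).
have hbM : 2 * hgt a < 2 ^ x.+1 by rewrite M_eq; lia.
have hb : hgt b = 2 * hgt a by rewrite nd_hgt.
have nb : isnode b by rewrite /isnode hb; have : 0 < hgt a := na; lia.
apply: connect_trans (_ : connect _ _ (enc b)) _.
  apply: conn_edge => //.
    by apply: E_child => //; rewrite hb; lia.
  by apply: hK; apply: LDT_child => //; apply: LDT_self.
apply: IH => //; first by rewrite hb; lia.
by move=> y hy; apply: hK; apply: LDT_child.
Qed.

Lemma up_conn (K : {set V}) a : sV \notin K -> isnode a ->
  (forall b, ancT b a -> enc b \notin K) -> connect (DR K) sV (enc a).
Proof.
move=> sK; move: {-1}(hgt a) (leqnn (hgt a)) => n.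
elim: n a => [|n IH] a hn na hK; first by move: na; rewrite /isnode; lia.
have aK := hK a (ancT_refl na).
case: (eqVneq (hgt a) 1) => h1.
  rewrite (node_eta na) h1; apply: conn_edge => //; first exact: E_root.
  by rewrite -h1 -node_eta.
set p := nd (cpy a) (hgt a %/ 2).
have hpM : hgt a %/ 2 < 2 ^ x.+1 by have := hgt_lt a; have := leq_div (hgt a) 2; lia.
have hp : hgt p = hgt a %/ 2 by rewrite nd_hgt.
have np : isnode p by rewrite /isnode hp; have : 0 < hgt a := na; lia.
have pa : ancT p a by rewrite /ancT nd_cpy eqxx hp ancn_parent // -hp.
apply: connect_trans (_ : connect _ _ (enc p)) _.
  apply: IH => //; first by rewrite hp; have := leq_div (hgt a) 2; lia.
  by move=> b hb; apply: hK; apply: ancT_trans pa.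
apply: conn_edge => //; last by apply: hK.
by apply: E_child => //; rewrite hp.
Qed.

Lemma conn_inv (R : rel V) (P : pred V) :
  (forall a b, R a b -> P a -> P b) -> forall a b, connect R a b -> P a -> P b.
Proof.
move=> H a b /connectP [p pth ->] {b}.
elim: p a pth => //= c p IH a /andP [ac pth] Pa; apply: IH pth _; exact: H Pa.
Qed.

Definition Kset v := [set u | Kp v (dec u)].

Lemma reg_conn v u : isnode v -> connect (DR (Kset v)) tV u -> RegT v (dec u).
Proof.
move=> nv c; apply: (@conn_inv _ (fun u => RegT v (dec u)) _ _ _ c).
  move=> a b /and3P [eab na nb]; move: na nb; rewrite !inE => na nb; exact: RegT_closed.
by rewrite /tV encK /RegT eqxx.
Qed.

Lemma hpa1 (K : {set V}) a b : has_path_avoiding eV [set a] [set b] K =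
  [&& a \notin K, b \notin K & connect (DR K) a b].
Proof.
apply/existsP/idP => [[a' /andP [/set1P -> /existsP [b' /andP [/set1P -> //]]]]|h].
by exists a; rewrite set11 /=; apply/existsP; exists b; rewrite set11.
Qed.

Lemma NR1 (K : {set V}) a u : a \notin K -> (u \in NR eV [set a] K) = ~~ connect (DR K) a u.
Proof.
move=> aK; rewrite inE; congr negb; apply/existsP/idP => [[a' /andP [/set1P -> /andP [_ //]]]|h].
by exists a; rewrite set11 aK.
Qed.

Lemma is_sepE (K : {set V}) : is_sep eV [set sV] [set tV] K =
  [&& sV \notin K, tV \notin K & ~~ connect (DR K) sV tV].
Proof.
rewrite /is_sep hpa1 !(disjoint_sym K) !disjoints1.
by case: (sV \in K); case: (tV \in K).
Qed.


Lemma card_hit (W : finType) (I : {set W}) (P : W -> {set W}) (K : {set W}) :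
  (forall i j, i \in I -> j \in I -> i != j -> forall y, y \in P i -> y \in P j -> False) ->
  (forall i, i \in I -> exists2 y, y \in K & y \in P i) -> #|I| <= #|K|.
Proof.
move=> disj hit.
pose f y := [pick i in I | y \in P i].
have <- : #|[set Some i | i in I]| = #|I| by apply: card_imset => a b [].
apply: leq_trans (leq_imset_card f K).
apply: subset_leq_card; apply/subsetP => _ /imsetP [i iI ->].
have [y yK yP] := hit i iI.
apply/imsetP; exists y => //; rewrite /f; case: pickP => [j /andP [jI yj]|/(_ i)].
  case: (eqVneq j i) => [->//|ne]; exfalso; exact: disj jI iI ne y yj yP.
by rewrite iI yP.
Qed.

Lemma Kset_sep v : isnode v -> is_sep eV [set sV] [set tV] (Kset v).
Proof.
move=> nv; rewrite is_sepE !inE /sV /tV !encK /Kp /isnode /=.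
rewrite conn_sym; apply/negP => /(reg_conn nv); rewrite encK /RegT /=.
by case/existsP=> k /and3P [_ /ancT_nodeR].
Qed.

Lemma K_notin_conn v a : isnode v -> Kp v a -> ~~ connect (DR (Kset v)) tV (enc a).
Proof.
move=> nv Ka; apply/negP => /(reg_conn nv); rewrite encK /RegT.
case/orP=> [/eqP ea|/existsP [k /and3P [Kk ka kna]]].
  by have := Kp_node Ka; rewrite ea.
by move: kna; rewrite (P1 nv Kk Ka ka) eqxx.
Qed.

Lemma Kset_min v (K' : {set V}) : isnode v -> K' \proper Kset v -> ~~ is_sep eV [set sV] [set tV] K'.
Proof.
move=> nv /properP [sub [u uK uK']].
have nK z : ~~ Kp v (dec z) -> z \notin K'.
  by move=> h; apply: contra h => zK; move: (subsetP sub z zK); rewrite inE.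
have sK : sV \notin K' by apply: nK; rewrite /sV encK /Kp /isnode.
have tK : tV \notin K' by apply: nK; rewrite /tV encK /Kp /isnode.
rewrite is_sepE sK tK /= negbK.
move: uK; rewrite inE => Ka; set a := dec u in Ka.
have ua : u = enc a by rewrite /a decK.
have na := Kp_node Ka.
apply: connect_trans (_ : connect _ _ (enc a)) _.
  apply: up_conn => // b ab; case: (eqVneq b a) => [->|ne]; first by rewrite -ua.
  apply: nK; rewrite encK; apply/negP => Kb; move: ne; rewrite (P1 nv Kb Ka ab) eqxx.
  by [].
apply: down_conn => // y Ly; case: (eqVneq y a) => [->|ne]; first by rewrite -ua.
apply: nK; rewrite encK; apply/negP => Ky; move: ne; rewrite (P1 nv Ka Ky (LDT_anc Ly)) eqxx.
by [].
Qed.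

Lemma Kset_imp v (K' : {set V}) : isnode v -> is_sep eV [set sV] [set tV] K' ->
  sep_prec eV [set tV] (Kset v) K' -> #|Kset v| < #|K'|.
Proof.
move=> nv sepK' prec; have := sepK'; rewrite is_sepE => /and3P [sK' tK' _].
have tK : tV \notin Kset v by rewrite inE /tV encK /Kp /isnode.
case/properP: prec => sub [w wK' wnK].
rewrite NR1 // in wK'; rewrite NR1 // negbK in wnK.
have := reg_conn nv wnK; rewrite /RegT.
case/orP=> [/eqP wt|/existsP [u0 /and3P [K0 a0 ne0]]].
  by move: wK'; rewrite -(decK w) wt connect0.
set wT := dec w in a0 ne0.
have nKw : ~~ Kp v wT.
  by apply/negP => Kw; move: ne0; rewrite (P1 nv K0 Kw a0) eqxx.
have KNR a : Kp v a -> ~~ connect (DR K') tV (enc a).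
  move=> Ka; have := K_notin_conn nv Ka; rewrite -NR1 // => h.
  by have := subsetP sub _ h; rewrite NR1.
pose I := [set u | (dec u == wT) || Kp v (dec u)].
pose P u := [set y | Pp wT (dec u) (dec y)].
have cI : #|I| = (#|Kset v|).+1.
  have -> : I = w |: Kset v.
    by apply/setP => u; rewrite !inE (inj_eq (can_inj decK)).
  by rewrite cardsU1 inE nKw.
suff : #|I| <= #|K'| by rewrite cI.
apply: (card_hit (P := P)).
  move=> i j; rewrite /I !inE => Ii Ij ij y; rewrite /P !inE => Pi Pj.
  apply: (Pp_disj nv K0 a0 Ii Ij _ Pi Pj).
  by rewrite (inj_eq (can_inj decK)).
move=> i; rewrite /I inE => Ii.
case: (boolP [exists y, (y \in K') && Pp wT (dec i) (dec y)]) => [/existsP [y /andP [yK yP]]|none].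
  by exists y; rewrite // /P inE.
exfalso.
have avoid z : Pp wT (dec i) z -> enc z \notin K'.
  move=> Pz; apply/negP => zK; move/existsP: none; apply; exists (enc z); rewrite zK encK.
  exact: Pz.
have nw : isnode wT := ancT_nodeR a0.
case: (eqVneq (dec i) wT) => [iw|inw].
  have : connect (DR K') (enc wT) tV.
    by apply: down_conn => // y h; apply: avoid; rewrite /Pp iw eqxx.
  by rewrite /wT decK conn_sym (negbTE wK').
move: Ii; rewrite (negbTE inw) /= => Ka.
set a := dec i in Ka inw avoid.
have na := Kp_node Ka.
move/negP: (KNR a Ka); apply; rewrite conn_sym.
case: (boolP (ancT a wT)) => aw.
  have [nc cc hc _] := csib_prop aw inw.
  have Pa : Pp wT a a by rewrite /Pp (negbTE inw) aw eqxx.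
  apply: connect_trans (_ : connect _ _ (enc (csib wT a))) _.
    apply: conn_edge; first exact: E_child.
      exact: avoid.
    by apply: avoid; rewrite /Pp (negbTE inw) aw LDT_self ?orbT.
  apply: down_conn => // y Ly; apply: avoid.
  by rewrite /Pp (negbTE inw) aw Ly orbT.
apply: down_conn => // y Ly; apply: avoid.
by rewrite /Pp (negbTE inw) (negbTE aw).
Qed.

Lemma Kset_card v : isnode v ->
  #|Kset v| <= r'.+1 + #|[set k : 'I_x | 2 <= hgt v %/ 2 ^ k]|.
Proof.
move=> nv.
set S := [set k : 'I_x | 2 <= hgt v %/ 2 ^ k].
pose A := [set enc (nd c 1) | c in [set~ cpy v]].
pose B := [set enc (nd (cpy v) (sib (hgt v %/ 2 ^ k))) | k : 'I_x in S].
have sub : Kset v \subset A :|: [set enc v] :|: B.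
  apply/subsetP => u; rewrite inE => Ka.
  have ua : u = enc (dec u) by rewrite decK.
  set a := dec u in Ka ua; have na := Kp_node Ka.
  case/andP: Ka => _ /or3P [/andP [ca /eqP ha]|/andP [/eqP ca /eqP ha]|/andP [/eqP ca /and3P [a1 a2 a3]]].
  - rewrite !inE; apply/orP; left; apply/orP; left.
    apply/imsetP; exists (cpy a); first by rewrite !inE.
    by rewrite ua {1}(node_eta na) ha.
  - by rewrite !inE ua (node_eq na nv ca ha) eqxx orbT.
  - rewrite !inE; apply/orP; right.
    case/ancnP: a1 => a0 [j hj].
    have j0 : j != 0 by apply: contra a2 => /eqP j0; rewrite -hj j0 expn0 divn1.
    set g := hgt v %/ 2 ^ j.-1.
    have hg : g %/ 2 = hgt a %/ 2.
      by rewrite -hj /g; have := divexpD (hgt v) j.-1 1; rewrite expn1 addn1 prednK ?lt0n // => <-.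
    have gne : hgt a != g.
      apply: contra a3 => /eqP e; apply/ancnP; split; first by rewrite -hg in a0; lia.
      by exists j.-1.
    have hs := sibP (esym hg) gne.
    have jx : j <= x by apply: ancn_depth (hgt_lt v) _; rewrite hj.
    have kx : j.-1 < x by move: j0; rewrite -lt0n; lia.
    apply/imsetP; exists (Ordinal kx).
      by rewrite inE /=; rewrite -/g; lia.
    by rewrite ua {1}(node_eta na) ca hs.
apply: leq_trans (subset_leq_card sub) _.
apply: leq_trans (leq_card_setU _ _).1 _.
apply: leq_add; last exact: leq_imset_card.
apply: leq_trans (leq_card_setU _ _).1 _.
rewrite cards1 addn1 ltnS.
apply: leq_trans (leq_imset_card _ _) _.
by rewrite cardsC1 card_ord.
Qed.

Lemma sep_lb (K : {set V}) : is_sep eV [set sV] [set tV] K -> r'.+1 <= #|K|.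
Proof.
rewrite is_sepE => /and3P [sK tK nc].
have hit c : exists2 y, y \in K & cpy (dec y) = c.
  case: (boolP [exists y, (y \in K) && LDT (nd c 1) (dec y)]) => [/existsP [y /andP [yK Ly]]|none].
    by exists y => //; case/and3P: Ly => /eqP -> _ _.
  exfalso; move/negP: nc; apply.
  have avoid z : LDT (nd c 1) z -> enc z \notin K.
    move=> Pz; apply/negP => zK; move/existsP: none; apply; exists (enc z); rewrite zK encK.
    exact: Pz.
  have nr : isnode (nd c 1) by apply: nd_node => //; exact: M_gt1.
  apply: connect_trans (_ : connect _ sV (enc (nd c 1))) _.
    by apply: conn_edge => //; [exact: E_root | exact: avoid (LDT_self nr)].
  exact: down_conn.
have : [set: 'I_r'.+1] \subset [set cpy (dec y) | y in K].
  by apply/subsetP => c _; have [y yK <-] := hit c; apply/imsetP; exists y.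
move/subset_leq_card; rewrite cardsT card_ord => h.
exact: leq_trans h (leq_imset_card _ _).
Qed.

Lemma Kset_important v : isnode v -> important_sep eV [set sV] [set tV] (Kset v).
Proof.
move=> nv; rewrite /important_sep /minimal_sep Kset_sep //=; apply/andP; split.
  by apply/forallP => K'; apply/implyP; apply: Kset_min.
apply/forallP => K'; apply/negP => /and3P [sep prec le].
by have := Kset_imp nv sep prec; rewrite ltnNge le.
Qed.

Definition v0 := nd ord0 1.
Lemma v0_node : isnode v0.
Proof. by apply: nd_node => //; exact: M_gt1. Qed.

Lemma Kset_v0_card : #|Kset v0| = r'.+1.
Proof.
apply/eqP; rewrite eqn_leq sep_lb ?Kset_sep ?v0_node // andbT.
apply: leq_trans (Kset_card v0_node) _.
rewrite -[X in _ <= X]addn0 leq_add2l leqn0 cards_eq0; apply/eqP/setP => k.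
rewrite !inE /v0 nd_hgt; last exact: M_gt1.
by have := leq_div 1 (2 ^ k); lia.
Qed.

Lemma Kset_excess v : isnode v -> important_excess_le eV [set sV] [set tV] x (Kset v).
Proof.
move=> nv; rewrite /important_excess_le Kset_important //=; apply/existsP; exists (Kset v0).
rewrite Kset_important ?v0_node //=; apply/andP; split.
  apply/forallP => S'; apply/implyP => /andP [/andP [sep _] _].
  by rewrite Kset_v0_card; apply: sep_lb.
rewrite Kset_v0_card; apply: leq_trans (Kset_card nv) _.
rewrite leq_add2l; apply: leq_trans (subset_leq_card (subsetT _)) _.
by rewrite cardsT card_ord.
Qed.

Lemma iso_T a b : ~~ isnode a -> a != sT -> a != tT -> E a b = false.
Proof.
case: a => [[[c h]|]|] //=; rewrite /isnode /= -eqn0Ngt => /eqP h0 _ _.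
case: b => [[[c' h']|]|]; rewrite /E /= ?h0 ?andbF //=.
  by rewrite div0n; apply/negbTE/negP => /andP [/andP [_ p] /eqP q]; move: p; rewrite -q.
by rewrite orbF leqn0 expn_eq0.
Qed.

Definition NodesV := [set u | isnode (dec u)].

Lemma union_eq : union_important_excess_le eV [set sV] [set tV] x = NodesV.
Proof.
apply/setP => u; rewrite inE; apply/bigcupP/idP => [[S /andP [/andP [minS _] _] uS]|nu].
  apply/negPn/negP => nn.
  case/andP: (minS) => sepS /forallP /(_ (S :\ u)); rewrite properD1 //= => nsep.
  move: (sepS); rewrite is_sepE => /and3P [sS tS ncS].
  have us : dec u != sT by apply: contraNneq sS => e; rewrite /sV -e decK.
  have ut : dec u != tT by apply: contraNneq tS => e; rewrite /tV -e decK.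
  have iso z : eV u z = false by rewrite /eV iso_T.
  move/negP: nsep; apply; rewrite is_sepE !inE (negbTE sS) (negbTE tS) !andbF /=.
  have eqR : del_rel eV (S :\ u) =2 del_rel eV S.
    move=> a b; rewrite /del_rel !inE; case: (eqVneq a u) => [->|au].
      by rewrite iso.
    case: (eqVneq b u) => [->|bu]; first by rewrite eV_sym iso.
    by [].
  by rewrite (eq_connect eqR).
exists (Kset (dec u)); first exact: Kset_excess.
by rewrite inE Kp_self.
Qed.

Lemma NodesV_card : #|NodesV| = r'.+1 * (2 ^ x.+1).-1.
Proof.
have -> : NodesV = enc @: [set a : T | isnode a].
  apply/setP => u; rewrite inE; apply/idP/imsetP => [nu|[a]].
    by exists (dec u); rewrite ?inE // decK.
  by rewrite inE => na ->; rewrite encK.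
rewrite card_imset; last exact: can_inj encK.
have -> : [set a : T | isnode a] =
  [set Some (Some p) | p in setX [set: 'I_r'.+1] [set~ h0]].
  apply/setP => a; apply/idP/imsetP.
    case: a => [[[c h]|]|]; rewrite inE /isnode /= => h0'; last 2 first.
      by [].
      by [].
    exists (c, h) => //; rewrite !inE /=; apply/eqP => e; move: h0'; rewrite e.
    by [].
  case=> [[c h]] hp ->.
  move: hp; rewrite !inE /= /isnode /= lt0n => hne; apply: contra hne => /eqP e.
  by apply/eqP; apply: val_inj.
rewrite card_imset; last by move=> p q [].
by rewrite cardsX cardsT cardsC1 !card_ord.
Qed.

Lemma main_V : [/\ symmetric eV, irreflexive eV & sV != tV] /\
  [/\ (exists K : {set V}, is_sep eV [set sV] [set tV] K /\ #|K| = r'.+1),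
      (forall K : {set V}, is_sep eV [set sV] [set tV] K -> r'.+1 <= #|K|) &
      #|union_important_excess_le eV [set sV] [set tV] x| = 2 ^ x.+1 * r'.+1 - r'.+1].
Proof.
split; first split.
- exact: eV_sym.
- by move=> u; rewrite /eV E_irr.
- by rewrite /sV /tV (inj_eq (can_inj encK)).
split.
- by exists (Kset v0); split; [exact: Kset_sep v0_node | exact: Kset_v0_card].
- exact: sep_lb.
- rewrite union_eq NodesV_card.
  have := M_gt0; set M := 2 ^ x.+1 => M0.
  by rewrite mulnC -subn1 mulnBl mul1n.
Qed.

End Graph.
End Tree.

Theorem theorem4 (x r : nat) : 1 <= r ->
  exists (n : nat) (e : rel 'I_n) (s t : 'I_n),
    [/\ symmetric e, irreflexive e & s != t] /\
    [/\ (* the smallest s-t separator has size r *)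
        (exists K : {set 'I_n}, is_sep e [set s] [set t] K /\ #|K| = r),
        (forall K : {set 'I_n}, is_sep e [set s] [set t] K -> r <= #|K|) &
        #|union_important_excess_le e [set s] [set t] x| = 2 ^ x.+1 * r - r].
Proof.
case: r => [//|r'] _.
have := main_V (@enum_valK (T x r')) (@enum_rankK (T x r')).
move=> H; do 4 eexists; exact: H.
Qed.
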